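(* Let $k,l$ be positive integers and let $f(s,u)=\sum_{m=k}^\infty\sum_{n=l}^\infty a_{m,n}m^{-s}n^{-u}$ be a double Dirichlet series that is absolutely convergent on $\mathbb H_{\rho_1}\times\mathbb H_{\rho_2}$ for some $\rho_1,\rho_2\in\mathbb R$. If $r>\max\{\rho_1,\rho_2\}$, then there exist positive constants $C_r,D_r$ such that for all $s,u\in\mathbb H_r$: $$|k^sl^uf(s,u)-a_{k,l}|\le C_r\Big(\frac{l^{\Re u}}{(l+1)^{\Re u-r}}+\frac{k^{\Re s}}{(k+1)^{\Re s-r}}+\frac{k^{\Re s}l^{\Re u}}{(k+1)^{\Re s-r}(l+1)^{\Re u-r}}\Big),$$ $$\Big|l^uf(s,u)-\sum_{m=k}^\infty a_{m,l}m^{-s}\Big|\le D_r\Big(\frac{l^{\Re u}}{(l+1)^{\Re u-r}}+\frac{k^{\Re s}l^{\Re u}}{(k+1)^{\Re s-r}(l+1)^{\Re u-r}}\Big).$$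
   Context: $\mathbb H_\rho=\{s\in\mathbb C:\Re s>\rho\}$. *)

(* Defs.v *)
From Stdlib Require Import Reals.
From Coquelicot Require Import Coquelicot.
Open Scope R_scope.

(* n^s = exp(s log n) for a positive integer n and complex s *)
Definition cpow (n : nat) (s : C) : C :=
  (exp (Re s * ln (INR n)) * cos (Im s * ln (INR n)),
   exp (Re s * ln (INR n)) * sin (Im s * ln (INR n))).

Definition CSeries (a : nat -> C) : C :=
  (Series (fun n => Re (a n)), Series (fun n => Im (a n))).

(* Absolute convergence of sum_{m>=k} sum_{n>=l} a m n m^{-s} n^{-u}
   on H_rho1 x H_rho2: the (nonnegative) partial sums over all finite
   rectangles of |a m n| m^{-Re s} n^{-Re u} are bounded. *)
Definition dd_abs_conv (a : nat -> nat -> C) (k l : nat) (rho1 rho2 : R) : Prop :=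
  forall s u : C, Re s > rho1 -> Re u > rho2 ->
  exists M : R, forall M1 N1 : nat,
    sum_f_R0 (fun i => sum_f_R0 (fun j =>
      Cmod (a (i + k)%nat (j + l)%nat)
      * Rpower (INR (i + k)) (- Re s) * Rpower (INR (j + l)) (- Re u)) N1) M1 <= M.

(* f(s,u) = sum_{m>=k} sum_{n>=l} a m n m^{-s} n^{-u} (iterated sum; equal to
   the double sum under absolute convergence) *)
Definition ddseries (a : nat -> nat -> C) (k l : nat) (s u : C) : C :=
  CSeries (fun i => CSeries (fun j =>
    (a (i + k)%nat (j + l)%nat * cpow (i + k) (- s) * cpow (j + l) (- u))%C)).

Definition drow (a : nat -> nat -> C) (k l : nat) (s : C) : C :=
  CSeries (fun i => (a (i + k)%nat l * cpow (i + k) (- s))%C).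

(* Main.v *)
Require Import Defs.
From Stdlib Require Import Reals Lra Lia.
From Coquelicot Require Import Coquelicot.
Open Scope R_scope.

Lemma exR_scal (c : R) (a : nat -> R) : ex_series a -> ex_series (fun n => c * a n).
Proof. intro H. exact (@ex_series_scal_l R_AbsRing R_NormedModule c a H). Qed.
Lemma exR_plus (a b : nat -> R) : ex_series a -> ex_series b -> ex_series (fun n => a n + b n).
Proof. intros H1 H2. exact (@ex_series_plus R_AbsRing R_NormedModule a b H1 H2). Qed.
Lemma exR_minus (a b : nat -> R) : ex_series a -> ex_series b -> ex_series (fun n => a n - b n).
Proof. intros H1 H2. exact (@ex_series_minus R_AbsRing R_NormedModule a b H1 H2). Qed.

Definition cex (w : nat -> C) :=
  ex_series (fun n => Re (w n)) /\ ex_series (fun n => Im (w n)).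

Lemma Im_le_Cmod (c : C) : Rabs (Im c) <= Cmod c.
Proof. eapply Rle_trans; [|apply Rmax_Cmod]. apply Rmax_r. Qed.
Lemma Re_le_Cmod (c : C) : Rabs (Re c) <= Cmod c.
Proof. eapply Rle_trans; [|apply Rmax_Cmod]. apply Rmax_l. Qed.

Lemma cex_dom (w : nat -> C) (B : nat -> R) :
  (forall n, Cmod (w n) <= B n) -> ex_series B -> cex w.
Proof.
  intros H HB; split; apply (@ex_series_le R_AbsRing R_CompleteNormedModule _ B); auto; intro n;
  change (norm (Re (w n))) with (Rabs (Re (w n)));
  change (norm (Im (w n))) with (Rabs (Im (w n))).
  - eapply Rle_trans; [apply Re_le_Cmod|auto].
  - eapply Rle_trans; [apply Im_le_Cmod|auto].
Qed.

Lemma CSeries_scal (c : C) (w : nat -> C) : cex w ->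
  CSeries (fun n => c * w n)%C = (c * CSeries w)%C.
Proof.
  intros [H1 H2]. destruct c as [c1 c2]. unfold CSeries.
  assert (E1: Series (fun n => Re ((c1, c2) * w n)%C) = c1 * Series (fun n => Re (w n)) - c2 * Series (fun n => Im (w n))).
  { rewrite <- !Series_scal_l, <- Series_minus.
    - apply Series_ext; intro n; destruct (w n); simpl; ring.
    - now apply exR_scal.
    - now apply exR_scal. }
  assert (E2: Series (fun n => Im ((c1, c2) * w n)%C) = c1 * Series (fun n => Im (w n)) + c2 * Series (fun n => Re (w n))).
  { rewrite <- !Series_scal_l, <- Series_plus.
    - apply Series_ext; intro n; destruct (w n); simpl; ring.
    - now apply exR_scal.
    - now apply exR_scal. }
  rewrite E1, E2. unfold Cmult; simpl. f_equal; ring.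
Qed.

Lemma CSeries_minus (w v : nat -> C) : cex w -> cex v ->
  CSeries (fun n => w n - v n)%C = (CSeries w - CSeries v)%C.
Proof.
  intros [H1 H2] [H3 H4]. unfold CSeries.
  rewrite (Series_ext (fun n => Re (w n - v n)%C) (fun n => Re (w n) - Re (v n))).
  2:{ intro n; destruct (w n), (v n); simpl; ring. }
  rewrite (Series_ext (fun n => Im (w n - v n)%C) (fun n => Im (w n) - Im (v n))).
  2:{ intro n; destruct (w n), (v n); simpl; ring. }
  rewrite !Series_minus by auto. unfold Cminus, Cplus, Copp; simpl. f_equal; ring.
Qed.

Lemma Series_const_sum (a : nat -> R) (L : R) :
  (forall n, sum_f_R0 a n = L) -> ex_series a /\ Series a = L.
Proof.
  intros H.
  assert (Hs : is_series a L).
  { apply is_series_Reals. intros eps Heps. exists 0%nat. intros n _.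
    rewrite H. unfold R_dist. rewrite Rminus_diag, Rabs_R0. lra. }
  split; [exists L; auto| now apply is_series_unique].
Qed.

Lemma CSeries_delta (x : C) :
  CSeries (fun n => if Nat.eqb n 0 then x else 0%C) = x.
Proof.
  unfold CSeries.
  assert (h1 : forall n, sum_f_R0 (fun n0 : nat => Re (if n0 =? 0 then x else 0%C)) n = Re x).
  { intro n; induction n; simpl in *; [reflexivity| lra]. }
  assert (h2 : forall n, sum_f_R0 (fun n0 : nat => Im (if n0 =? 0 then x else 0%C)) n = Im x).
  { intro n; induction n; simpl in *; [reflexivity| lra]. }
  rewrite (proj2 (Series_const_sum _ _ h1)).
  rewrite (proj2 (Series_const_sum _ _ h2)).
  destruct x; reflexivity.
Qed.

Lemma CSeries_zero : CSeries (fun _ => 0%C) = 0%C.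
Proof.
  unfold CSeries.
  assert (h1 : forall n, sum_f_R0 (fun _ : nat => Re 0%C) n = 0).
  { intro n; induction n; simpl in *; [reflexivity| lra]. }
  assert (h2 : forall n, sum_f_R0 (fun _ : nat => Im 0%C) n = 0).
  { intro n; induction n; simpl in *; [reflexivity| lra]. }
  rewrite (proj2 (Series_const_sum _ _ h1)).
  rewrite (proj2 (Series_const_sum _ _ h2)). reflexivity.
Qed.

Lemma Series_nonneg (a : nat -> R) : (forall n, 0 <= a n) -> ex_series a -> 0 <= Series a.
Proof.
  intros H He.
  replace 0 with (Series (fun n => 0 * a n)).
  - apply Series_le; auto. intro n; split; [lra| rewrite Rmult_0_l; auto].
  - rewrite Series_scal_l; ring.
Qed.

Lemma Cmod_CSeries_le (w : nat -> C) (B : nat -> R) :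
  (forall n, Cmod (w n) <= B n) -> ex_series B -> Cmod (CSeries w) <= Series B.
Proof.
  intros H HB.
  assert (Bp : forall n, 0 <= B n) by (intro n; eapply Rle_trans; [apply Cmod_ge_0|apply H]).
  assert (SB := Series_nonneg B Bp HB).
  set (z := CSeries w).
  destruct (Req_dec (Cmod z) 0) as [Hz|Hz]; [rewrite Hz; auto|].
  assert (Hw := cex_dom w B H HB).
  assert (E : Re (Cconj z * z)%C = Series (fun n => Re (Cconj z * w n)%C)).
  { unfold z at 2. rewrite <- CSeries_scal by auto. reflexivity. }
  assert (E2 : Re (Cconj z * z)%C = Cmod z ^ 2).
  { rewrite Cmod2_alt. destruct z; simpl; ring. }
  assert (Hle : Series (fun n => Re (Cconj z * w n)%C) <= Cmod z * Series B).
  { assert (Hex : ex_series (fun n => Re (Cconj z * w n)%C)).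
    { apply (cex_dom (fun n => Cconj z * w n)%C (fun n => Cmod z * B n)).
      - intro n. rewrite Cmod_mult, Cmod_conj. apply Rmult_le_compat_l; auto. apply Cmod_ge_0.
      - now apply exR_scal. }
    assert (0 <= Series (fun n => Cmod z * B n - Re (Cconj z * w n)%C)).
    { apply Series_nonneg.
      - intro n. assert (h1 := Re_le_Cmod (Cconj z * w n)%C).
        rewrite Cmod_mult, Cmod_conj in h1.
        assert (h2 : Cmod z * Cmod (w n) <= Cmod z * B n) by (apply Rmult_le_compat_l; auto; apply Cmod_ge_0).
        apply Rabs_le_between in h1. lra.
      - apply exR_minus; auto. now apply exR_scal. }
    rewrite Series_minus, Series_scal_l in H0; auto; [lra|]. now apply exR_scal. }
  assert (Cmod z ^ 2 <= Cmod z * Series B) by lra.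
  assert (0 < Cmod z) by (assert (h := Cmod_ge_0 z); lra).
  nra.
Qed.

Lemma CSeries_ext (w v : nat -> C) : (forall n, w n = v n) -> CSeries w = CSeries v.
Proof. intro H. unfold CSeries. f_equal; apply Series_ext; intro n; now rewrite H. Qed.

Lemma sum_ge_term (f : nat -> R) (n : nat) : (forall k, 0 <= f k) -> f n <= sum_f_R0 f n.
Proof.
  intro H. destruct n; simpl; [lra|].
  assert (0 <= sum_f_R0 f n) by (apply cond_pos_sum; auto). lra.
Qed.

Lemma bound_series (a : nat -> R) (M' : R) :
  (forall n, 0 <= a n) -> (forall N, sum_f_R0 a N <= M') -> ex_series a /\ Series a <= M'.
Proof.
  intros Hp Hb.
  destruct (growing_cv (fun N => sum_f_R0 a N)) as [l Hl].
  - intro n; simpl. specialize (Hp (S n)). lra.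
  - exists M'. intros x [n ->]. apply Hb.
  - assert (Hs : is_series a l) by (apply is_series_Reals; exact Hl).
    split; [exists l; exact Hs|]. rewrite (is_series_unique _ _ Hs).
    apply (Rle_cv_lim (Un := fun N => sum_f_R0 a N) (Vn := fun _ => M')); auto.
    intros eps Heps; exists 0%nat; intros; unfold R_dist; rewrite Rminus_diag, Rabs_R0; lra.
Qed.

Definition DS (z : nat -> nat -> C) := CSeries (fun i => CSeries (z i)).

Section Double.
Variable b : nat -> nat -> R.
Variable M : R.
Hypothesis bpos : forall i j, 0 <= b i j.
Hypothesis brect : forall M1 N1, sum_f_R0 (fun i => sum_f_R0 (fun j => b i j) N1) M1 <= M.

Lemma row_ex i : ex_series (b i).
Proof.
  refine (proj1 (bound_series (b i) M (bpos i) _)).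
  intro N. eapply Rle_trans; [|apply (brect i N)].
  apply (sum_ge_term (fun i0 => sum_f_R0 (fun j => b i0 j) N)).
  intro k; apply cond_pos_sum; auto.
Qed.

Lemma rowsum_ex N : ex_series (fun j => sum_f_R0 (fun i => b i j) N).
Proof.
  induction N; simpl.
  - apply row_ex.
  - apply exR_plus; auto. apply row_ex.
Qed.

Lemma exch N : sum_f_R0 (fun i => Series (b i)) N = Series (fun j => sum_f_R0 (fun i => b i j) N).
Proof.
  induction N; simpl; [reflexivity|].
  rewrite IHN, Series_plus; auto using rowsum_ex, row_ex.
Qed.

Lemma swap m n : sum_f_R0 (fun i => sum_f_R0 (fun j => b i j) n) m = sum_f_R0 (fun j => sum_f_R0 (fun i => b i j) m) n.
Proof.
  induction m; simpl; [reflexivity|]. rewrite IHm, plus_sum. reflexivity.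
Qed.

Lemma rows_total : ex_series (fun i => Series (b i)) /\ Series (fun i => Series (b i)) <= M.
Proof.
  apply bound_series.
  - intro n; apply Series_nonneg; auto using row_ex.
  - intro N. rewrite exch. apply bound_series.
    + intro; apply cond_pos_sum; auto.
    + intro N1. rewrite <- swap. apply brect.
Qed.

Lemma dom_props (z : nat -> nat -> C) (c : R) : 0 <= c ->
  (forall i j, Cmod (z i j) <= c * b i j) ->
  (forall i, cex (z i)) /\ cex (fun i => CSeries (z i)) /\ Cmod (DS z) <= c * M.
Proof.
  intros Hc H.
  assert (Hi : forall i, Cmod (CSeries (z i)) <= c * Series (b i)).
  { intro i. rewrite <- Series_scal_l. apply Cmod_CSeries_le; auto. apply exR_scal, row_ex. }
  destruct rows_total as [Ht1 Ht2].
  split; [|split].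
  - intro i. apply (cex_dom _ (fun j => c * b i j)); auto. apply exR_scal, row_ex.
  - apply (cex_dom _ (fun i => c * Series (b i))); auto. apply exR_scal; auto.
  - unfold DS. eapply Rle_trans; [apply (Cmod_CSeries_le _ (fun i => c * Series (b i))); auto|].
    + apply exR_scal; auto.
    + rewrite Series_scal_l. apply Rmult_le_compat_l; auto.
Qed.

Definition Dom (z : nat -> nat -> C) := exists c, 0 <= c /\ forall i j, Cmod (z i j) <= c * b i j.

Lemma DS_minus z w : Dom z -> Dom w -> DS (fun i j => z i j - w i j)%C = (DS z - DS w)%C.
Proof.
  intros [c1 [Hc1 H1]] [c2 [Hc2 H2]].
  destruct (dom_props z c1 Hc1 H1) as [A1 [B1 _]].
  destruct (dom_props w c2 Hc2 H2) as [A2 [B2 _]].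
  unfold DS. rewrite <- CSeries_minus by auto.
  apply CSeries_ext; intro i. apply CSeries_minus; auto.
Qed.

Lemma DS_scal (a : C) z : Dom z -> DS (fun i j => a * z i j)%C = (a * DS z)%C.
Proof.
  intros [c1 [Hc1 H1]].
  destruct (dom_props z c1 Hc1 H1) as [A1 [B1 _]].
  unfold DS. rewrite <- CSeries_scal by auto.
  apply CSeries_ext; intro i. apply CSeries_scal; auto.
Qed.

End Double.

Lemma DS_delta (x : C) :
  DS (fun i j => if Nat.eqb i 0 then (if Nat.eqb j 0 then x else 0%C) else 0%C) = x.
Proof.
  unfold DS. transitivity (CSeries (fun n => if Nat.eqb n 0 then x else 0%C)); [|apply CSeries_delta]. apply CSeries_ext; intro i.
  destruct i; simpl.
  - apply CSeries_delta.
  - apply CSeries_zero.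
Qed.

Lemma DS_dd (x : C) :
  DS (fun i j => match i, j with 0%nat, 0%nat => x | _, _ => 0%C end) = x.
Proof.
  transitivity (DS (fun i j => if Nat.eqb i 0 then (if Nat.eqb j 0 then x else 0%C) else 0%C)); [|apply DS_delta].
  unfold DS. apply CSeries_ext; intro i.
  apply CSeries_ext; intro j. destruct i, j; reflexivity.
Qed.

Lemma Re_opp (s : C) : Re (- s)%C = - Re s.
Proof. destruct s; reflexivity. Qed.
Lemma Im_opp (s : C) : Im (- s)%C = - Im s.
Proof. destruct s; reflexivity. Qed.

Lemma cpow_mod n s : Cmod (cpow n s) = exp (Re s * ln (INR n)).
Proof.
  unfold Cmod, cpow. cbn [fst snd].
  set (e := exp (Re s * ln (INR n))). set (y := Im s * ln (INR n)).
  assert (He : 0 < e) by apply exp_pos.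
  assert (H := sin2_cos2 y). unfold Rsqr in H.
  replace ((e * cos y) ^ 2 + (e * sin y) ^ 2) with (e ^ 2).
  - apply sqrt_pow2; lra.
  - transitivity (e ^ 2 * (sin y * sin y + cos y * cos y)); [rewrite H; ring| ring].
Qed.

Lemma cpow_inv n s : (cpow n s * cpow n (- s) = 1)%C.
Proof.
  unfold cpow. rewrite Re_opp, Im_opp.
  rewrite <- !Ropp_mult_distr_l, cos_neg, sin_neg, exp_Ropp.
  set (e := exp (Re s * ln (INR n))). set (y := Im s * ln (INR n)).
  assert (He : 0 < e) by apply exp_pos.
  assert (H := sin2_cos2 y). unfold Rsqr in H.
  unfold Cmult; cbn [fst snd]. apply injective_projections; cbn [fst snd RtoC].
  - field_simplify; [|lra]. rewrite Rplus_comm. unfold pow. rewrite !Rmult_1_r. rewrite H. reflexivity.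
  - field; lra.
Qed.

Lemma exp_mono x y : x <= y -> exp x <= exp y.
Proof. intros [H|H]; [left; now apply exp_increasing | subst; right; reflexivity]. Qed.

Lemma fin (A E1 E2 G Cc : R) : 0 <= A -> E1 <= G + E2 -> exp G <= Cc ->
  A * exp E1 <= Cc * (A * exp E2).
Proof.
  intros HA HE HG.
  assert (exp E1 <= exp G * exp E2) by (rewrite <- exp_plus; apply exp_mono; lra).
  assert (0 <= exp E2) by (left; apply exp_pos).
  assert (exp G * exp E2 <= Cc * exp E2) by (apply Rmult_le_compat_r; auto).
  nra.
Qed.

Lemma KT Q F K T : exp Q <= K -> exp F <= T -> exp (Q + F) <= K * T.
Proof.
  intros. rewrite exp_plus. assert (0 < exp Q) by apply exp_pos. assert (0 < exp F) by apply exp_pos.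
  apply Rmult_le_compat; lra.
Qed.

Lemma ln_mono (p q : nat) : (0 < p)%nat -> (p <= q)%nat -> ln (INR p) <= ln (INR q).
Proof.
  intros. apply ln_le; [apply lt_0_INR; lia| apply le_INR; lia].
Qed.

Lemma ln_nonneg (p : nat) : (0 < p)%nat -> 0 <= ln (INR p).
Proof. intros. rewrite <- ln_1. replace 1 with (INR 1) by reflexivity. apply ln_mono; lia. Qed.

Lemma Tform1 (l : nat) (t r : R) :
  Rpower (INR l) t / Rpower (INR (l + 1)) (t - r) = exp (t * ln (INR l) + - (t - r) * ln (INR (l + 1))).
Proof. unfold Rpower, Rdiv. rewrite <- exp_Ropp, <- exp_plus. f_equal. ring. Qed.

Lemma Tform3 (k l : nat) (s t r : R) :
  Rpower (INR k) s * Rpower (INR l) t / (Rpower (INR (k + 1)) (s - r) * Rpower (INR (l + 1)) (t - r))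
  = exp (s * ln (INR k) + t * ln (INR l) + - (s - r) * ln (INR (k + 1)) + - (t - r) * ln (INR (l + 1))).
Proof. unfold Rpower, Rdiv. rewrite <- !exp_plus, <- exp_Ropp, <- exp_plus. f_equal. ring. Qed.

Definition bb (a : nat -> nat -> C) (k l : nat) (r : R) (i j : nat) :=
  Cmod (a (i + k)%nat (j + l)%nat) * exp (- r * ln (INR (i + k))) * exp (- r * ln (INR (j + l))).
Definition tt (a : nat -> nat -> C) (k l : nat) (s u : C) (i j : nat) :=
  (a (i + k)%nat (j + l)%nat * cpow (i + k) (- s) * cpow (j + l) (- u))%C.

Lemma Csub0 (x : C) : (x - 0 = x)%C.
Proof. ring. Qed.

Definition F1 (l : nat) (r t : R) := t * ln (INR l) + - (t - r) * ln (INR (l + 1)).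
Definition F3 (k l : nat) (r s t : R) :=
  s * ln (INR k) + t * ln (INR l) + - (s - r) * ln (INR (k + 1)) + - (t - r) * ln (INR (l + 1)).
Definition TT (k l : nat) (r s t : R) := exp (F1 l r t) + exp (F1 k r s) + exp (F3 k l r s t).
Definition K1 (k l : nat) (r : R) := exp (r * ln (INR k)) + exp (r * ln (INR l)) + 1.
Definition K2 (k : nat) (r : R) := 1 + exp (- r * ln (INR k)).

Lemma bb_nonneg a k l r i j : 0 <= bb a k l r i j.
Proof.
  unfold bb. assert (h1 := exp_pos (- r * ln (INR (i + k)))). assert (h2 := exp_pos (- r * ln (INR (j + l)))).
  assert (h3 := Cmod_ge_0 (a (i + k)%nat (j + l)%nat)).
  apply Rmult_le_pos; [apply Rmult_le_pos|]; lra.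
Qed.

Lemma TT_pos k l r s t : 0 < TT k l r s t.
Proof. unfold TT. assert (h1 := exp_pos (F1 l r t)). assert (h2 := exp_pos (F1 k r s)). assert (h3 := exp_pos (F3 k l r s t)). lra. Qed.
Lemma K1_pos k l r : 1 <= K1 k l r.
Proof. unfold K1. assert (h1 := exp_pos (r * ln (INR k))). assert (h2 := exp_pos (r * ln (INR l))). lra. Qed.
Lemma K2_pos k r : 1 <= K2 k r.
Proof. unfold K2. assert (h1 := exp_pos (- r * ln (INR k))). lra. Qed.

Ltac expos := repeat match goal with
  | |- context [exp ?x] => lazymatch goal with
       | _ : 0 < exp x |- _ => fail
       | _ => assert (0 < exp x) by apply exp_pos end
  end.

Lemma entry1 a k l r s u i j : (0 < k)%nat -> (0 < l)%nat -> Re s > r -> Re u > r ->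
  Cmod ((cpow k s * cpow l u) * tt a k l s u i j
        - match i, j with 0%nat, 0%nat => a k l | _, _ => 0 end)%C
  <= (K1 k l r * TT k l r (Re s) (Re u)) * bb a k l r i j.
Proof.
  intros Hk Hl Hs Hu.
  assert (hk := ln_nonneg k Hk). assert (hl := ln_nonneg l Hl).
  assert (Kp := K1_pos k l r). assert (Tp := TT_pos k l r (Re s) (Re u)).
  destruct i as [|i], j as [|j]; cbv beta iota.
  - unfold tt. rewrite !Nat.add_0_l.
    replace (cpow k s * cpow l u * (a k l * cpow k (- s) * cpow l (- u)) - a k l)%C
      with (a k l * (cpow k s * cpow k (- s)) * (cpow l u * cpow l (- u)) - a k l)%C by ring.
    rewrite !cpow_inv. replace (a k l * 1 * 1 - a k l)%C with (RtoC 0) by ring.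
    rewrite Cmod_0. apply Rmult_le_pos; [nra|apply bb_nonneg].
  - rewrite Csub0. unfold tt, bb. rewrite !Nat.add_0_l, !Cmod_mult, !cpow_mod, !Re_opp.
    assert (hm : ln (INR (l + 1)) <= ln (INR (S j + l))) by (apply ln_mono; lia).
    apply (Rle_trans _ (Cmod (a k (S j + l)%nat) * exp (Re s * ln (INR k) + Re u * ln (INR l) + - Re s * ln (INR k) + - Re u * ln (INR (S j + l))))); [right; rewrite !exp_plus; ring|].
    apply (Rle_trans _ (K1 k l r * TT k l r (Re s) (Re u) * (Cmod (a k (S j + l)%nat) * exp (- r * ln (INR k) + - r * ln (INR (S j + l)))))); [|right; rewrite exp_plus; ring].
    apply fin with (G := r * ln (INR k) + F1 l r (Re u)); [apply Cmod_ge_0| |].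
    + unfold F1. assert (0 <= (Re u - r) * (ln (INR (S j + l)) - ln (INR (l + 1)))) by (apply Rmult_le_pos; lra). nra.
    + apply KT; unfold K1, TT; expos; lra.
  - rewrite Csub0. unfold tt, bb. rewrite !Nat.add_0_l, !Cmod_mult, !cpow_mod, !Re_opp.
    assert (hm : ln (INR (k + 1)) <= ln (INR (S i + k))) by (apply ln_mono; lia).
    apply (Rle_trans _ (Cmod (a (S i + k)%nat l) * exp (Re s * ln (INR k) + Re u * ln (INR l) + - Re s * ln (INR (S i + k)) + - Re u * ln (INR l)))); [right; rewrite !exp_plus; ring|].
    apply (Rle_trans _ (K1 k l r * TT k l r (Re s) (Re u) * (Cmod (a (S i + k)%nat l) * exp (- r * ln (INR (S i + k)) + - r * ln (INR l))))); [|right; rewrite exp_plus; ring].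
    apply fin with (G := r * ln (INR l) + F1 k r (Re s)); [apply Cmod_ge_0| |].
    + unfold F1. assert (0 <= (Re s - r) * (ln (INR (S i + k)) - ln (INR (k + 1)))) by (apply Rmult_le_pos; lra). nra.
    + apply KT; unfold K1, TT; expos; lra.
  - rewrite Csub0. unfold tt, bb. rewrite !Cmod_mult, !cpow_mod, !Re_opp.
    assert (hm : ln (INR (k + 1)) <= ln (INR (S i + k))) by (apply ln_mono; lia).
    assert (hm' : ln (INR (l + 1)) <= ln (INR (S j + l))) by (apply ln_mono; lia).
    apply (Rle_trans _ (Cmod (a (S i + k)%nat (S j + l)%nat) * exp (Re s * ln (INR k) + Re u * ln (INR l) + - Re s * ln (INR (S i + k)) + - Re u * ln (INR (S j + l))))); [right; rewrite !exp_plus; ring|].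
    apply (Rle_trans _ (K1 k l r * TT k l r (Re s) (Re u) * (Cmod (a (S i + k)%nat (S j + l)%nat) * exp (- r * ln (INR (S i + k)) + - r * ln (INR (S j + l)))))); [|right; rewrite exp_plus; ring].
    apply fin with (G := 0 + F3 k l r (Re s) (Re u)); [apply Cmod_ge_0| |].
    + unfold F3. assert (0 <= (Re s - r) * (ln (INR (S i + k)) - ln (INR (k + 1)))) by (apply Rmult_le_pos; lra).
      assert (0 <= (Re u - r) * (ln (INR (S j + l)) - ln (INR (l + 1)))) by (apply Rmult_le_pos; lra). nra.
    + apply KT; unfold K1, TT; rewrite ?exp_0; expos; lra.
Qed.

Definition TT2 (k l : nat) (r s t : R) := exp (F1 l r t) + exp (F3 k l r s t).
Lemma TT2_pos k l r s t : 0 < TT2 k l r s t.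
Proof. unfold TT2. expos. lra. Qed.

Lemma entry2 a k l r s u i j : (0 < k)%nat -> (0 < l)%nat -> Re s > r -> Re u > r ->
  Cmod (cpow l u * tt a k l s u i j
        - match j with 0%nat => (a (i + k)%nat l * cpow (i + k) (- s))%C | _ => 0 end)%C
  <= (K2 k r * TT2 k l r (Re s) (Re u)) * bb a k l r i j.
Proof.
  intros Hk Hl Hs Hu.
  assert (hk := ln_nonneg k Hk). assert (hl := ln_nonneg l Hl).
  assert (Kp := K2_pos k r). assert (Tp := TT2_pos k l r (Re s) (Re u)).
  destruct j as [|j]; cbv beta iota.
  - unfold tt. rewrite !Nat.add_0_l.
    replace (cpow l u * (a (i + k)%nat l * cpow (i + k) (- s) * cpow l (- u)) - a (i + k)%nat l * cpow (i + k) (- s))%C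
      with (a (i + k)%nat l * cpow (i + k) (- s) * (cpow l u * cpow l (- u)) - a (i + k)%nat l * cpow (i + k) (- s))%C by ring.
    rewrite !cpow_inv. replace (a (i + k)%nat l * cpow (i + k) (- s) * 1 - a (i + k)%nat l * cpow (i + k) (- s))%C with (RtoC 0) by ring.
    rewrite Cmod_0. apply Rmult_le_pos; [nra|apply bb_nonneg].
  - destruct i as [|i].
    + rewrite Csub0. unfold tt, bb. rewrite !Nat.add_0_l, !Cmod_mult, !cpow_mod, !Re_opp.
      assert (hm : ln (INR (l + 1)) <= ln (INR (S j + l))) by (apply ln_mono; lia).
      apply (Rle_trans _ (Cmod (a k (S j + l)%nat) * exp (Re u * ln (INR l) + - Re s * ln (INR k) + - Re u * ln (INR (S j + l))))); [right; rewrite !exp_plus; ring|].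
      apply (Rle_trans _ (K2 k r * TT2 k l r (Re s) (Re u) * (Cmod (a k (S j + l)%nat) * exp (- r * ln (INR k) + - r * ln (INR (S j + l)))))); [|right; rewrite exp_plus; ring].
      apply fin with (G := 0 + F1 l r (Re u)); [apply Cmod_ge_0| |].
      * unfold F1. assert (0 <= (Re u - r) * (ln (INR (S j + l)) - ln (INR (l + 1)))) by (apply Rmult_le_pos; lra).
        assert (0 <= (Re s - r) * ln (INR k)) by (apply Rmult_le_pos; lra). nra.
      * apply KT; unfold K2, TT2; rewrite ?exp_0; expos; lra.
    + rewrite Csub0. unfold tt, bb. rewrite !Cmod_mult, !cpow_mod, !Re_opp.
      assert (hm : ln (INR (k + 1)) <= ln (INR (S i + k))) by (apply ln_mono; lia).
      assert (hm' : ln (INR (l + 1)) <= ln (INR (S j + l))) by (apply ln_mono; lia).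
      assert (hk1 : ln (INR k) <= ln (INR (k + 1))) by (apply ln_mono; lia).
      apply (Rle_trans _ (Cmod (a (S i + k)%nat (S j + l)%nat) * exp (Re u * ln (INR l) + - Re s * ln (INR (S i + k)) + - Re u * ln (INR (S j + l))))); [right; rewrite !exp_plus; ring|].
      apply (Rle_trans _ (K2 k r * TT2 k l r (Re s) (Re u) * (Cmod (a (S i + k)%nat (S j + l)%nat) * exp (- r * ln (INR (S i + k)) + - r * ln (INR (S j + l)))))); [|right; rewrite exp_plus; ring].
      apply fin with (G := - r * ln (INR k) + F3 k l r (Re s) (Re u)); [apply Cmod_ge_0| |].
      * unfold F3. assert (0 <= (Re s - r) * (ln (INR (S i + k)) - ln (INR (k + 1)))) by (apply Rmult_le_pos; lra).
        assert (0 <= (Re u - r) * (ln (INR (S j + l)) - ln (INR (l + 1)))) by (apply Rmult_le_pos; lra).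
        assert (0 <= (Re s - r) * ln (INR k)) by (apply Rmult_le_pos; lra). nra.
      * apply KT; unfold K2, TT2; expos; lra.
Qed.

Lemma dom_tt a k l r s u i j : (0 < k)%nat -> (0 < l)%nat -> Re s > r -> Re u > r ->
  Cmod (tt a k l s u i j) <= 1 * bb a k l r i j.
Proof.
  intros Hk Hl Hs Hu. unfold tt, bb. rewrite !Cmod_mult, !cpow_mod, !Re_opp.
  assert (h1 := ln_nonneg (i + k) ltac:(lia)). assert (h2 := ln_nonneg (j + l) ltac:(lia)).
  apply (Rle_trans _ (Cmod (a (i + k)%nat (j + l)%nat) * exp (- Re s * ln (INR (i + k)) + - Re u * ln (INR (j + l))))); [right; rewrite !exp_plus; ring|].
  apply (Rle_trans _ (1 * (Cmod (a (i + k)%nat (j + l)%nat) * exp (- r * ln (INR (i + k)) + - r * ln (INR (j + l)))))); [|right; rewrite exp_plus; ring].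
  apply fin with (G := 0); [apply Cmod_ge_0| nra | rewrite exp_0; lra].
Qed.

Lemma dom_dd a k l r i j : (0 < k)%nat -> (0 < l)%nat ->
  Cmod (match i, j with 0%nat, 0%nat => a k l | _, _ => 0%C end)
  <= exp (r * ln (INR k) + r * ln (INR l)) * bb a k l r i j.
Proof.
  intros Hk Hl. assert (h := exp_pos (r * ln (INR k) + r * ln (INR l))).
  destruct i as [|i], j as [|j]; cbv beta iota;
    try (rewrite Cmod_0; apply Rmult_le_pos; [lra|apply bb_nonneg]).
  unfold bb. rewrite !Nat.add_0_l.
  apply (Rle_trans _ (Cmod (a k l) * exp 0)); [right; rewrite exp_0; ring|].
  apply (Rle_trans _ (exp (r * ln (INR k) + r * ln (INR l)) * (Cmod (a k l) * exp (- r * ln (INR k) + - r * ln (INR l))))); [|right; rewrite (exp_plus (- r * _)); ring].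
  apply fin with (G := r * ln (INR k) + r * ln (INR l)); [apply Cmod_ge_0| lra | lra].
Qed.

Lemma dom_dY a k l r s i j : (0 < k)%nat -> (0 < l)%nat -> Re s > r ->
  Cmod (match j with 0%nat => (a (i + k)%nat l * cpow (i + k) (- s))%C | _ => 0%C end)
  <= exp (r * ln (INR l)) * bb a k l r i j.
Proof.
  intros Hk Hl Hs. assert (h := exp_pos (r * ln (INR l))).
  destruct j as [|j]; cbv beta iota;
    [| rewrite Cmod_0; apply Rmult_le_pos; [lra|apply bb_nonneg]].
  unfold bb. rewrite !Nat.add_0_l, !Cmod_mult, cpow_mod, Re_opp.
  assert (h1 := ln_nonneg (i + k) ltac:(lia)).
  apply (Rle_trans _ (exp (r * ln (INR l)) * (Cmod (a (i + k)%nat l) * exp (- r * ln (INR (i + k)) + - r * ln (INR l))))); [|right; rewrite exp_plus; ring].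
  apply fin with (G := r * ln (INR l)); [apply Cmod_ge_0| nra | lra].
Qed.

Lemma TT_eq k l r s t :
  Rpower (INR l) t / Rpower (INR (l + 1)) (t - r)
  + Rpower (INR k) s / Rpower (INR (k + 1)) (s - r)
  + Rpower (INR k) s * Rpower (INR l) t
    / (Rpower (INR (k + 1)) (s - r) * Rpower (INR (l + 1)) (t - r)) = TT k l r s t.
Proof. rewrite !Tform1, Tform3. reflexivity. Qed.

Lemma TT2_eq k l r s t :
  Rpower (INR l) t / Rpower (INR (l + 1)) (t - r)
  + Rpower (INR k) s * Rpower (INR l) t
    / (Rpower (INR (k + 1)) (s - r) * Rpower (INR (l + 1)) (t - r)) = TT2 k l r s t.
Proof. rewrite !Tform1, Tform3. reflexivity. Qed.

Theorem lemma2p5 (k l : nat) (a : nat -> nat -> C) (rho1 rho2 : R) :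
  (0 < k)%nat -> (0 < l)%nat ->
  dd_abs_conv a k l rho1 rho2 ->
  forall r : R, r > Rmax rho1 rho2 ->
  exists Cr Dr : R, 0 < Cr /\ 0 < Dr /\
    forall s u : C, Re s > r -> Re u > r ->
      Cmod (cpow k s * cpow l u * ddseries a k l s u - a k l)%C
        <= Cr * ( Rpower (INR l) (Re u) / Rpower (INR (l + 1)) (Re u - r)
                + Rpower (INR k) (Re s) / Rpower (INR (k + 1)) (Re s - r)
                + Rpower (INR k) (Re s) * Rpower (INR l) (Re u)
                  / (Rpower (INR (k + 1)) (Re s - r) * Rpower (INR (l + 1)) (Re u - r)))
      /\
      Cmod (cpow l u * ddseries a k l s u - drow a k l s)%C
        <= Dr * ( Rpower (INR l) (Re u) / Rpower (INR (l + 1)) (Re u - r)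
                + Rpower (INR k) (Re s) * Rpower (INR l) (Re u)
                  / (Rpower (INR (k + 1)) (Re s - r) * Rpower (INR (l + 1)) (Re u - r))).
Proof.
  intros Hk Hl Habs r Hr.
  assert (Hr1 : r > rho1) by (assert (h := Rmax_l rho1 rho2); lra).
  assert (Hr2 : r > rho2) by (assert (h := Rmax_r rho1 rho2); lra).
  destruct (Habs (RtoC r) (RtoC r) Hr1 Hr2) as [M0 HM0].
  assert (brect : forall M1 N1, sum_f_R0 (fun i => sum_f_R0 (fun j => bb a k l r i j) N1) M1 <= M0).
  { intros M1 N1. exact (HM0 M1 N1). }
  assert (bpos : forall i j, 0 <= bb a k l r i j) by (intros; apply bb_nonneg).
  assert (HM : M0 <= Rabs M0 + 1) by (assert (h := Rle_abs M0); lra).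
  assert (HMp : 0 < Rabs M0 + 1) by (assert (h := Rabs_pos M0); lra).
  assert (K1p := K1_pos k l r). assert (K2p := K2_pos k r).
  exists (K1 k l r * (Rabs M0 + 1)), (K2 k r * (Rabs M0 + 1)).
  split; [apply Rmult_lt_0_compat; lra|split; [apply Rmult_lt_0_compat; lra|]].
  intros s u Hs Hu. rewrite TT_eq, TT2_eq.
  assert (Tp := TT_pos k l r (Re s) (Re u)). assert (T2p := TT2_pos k l r (Re s) (Re u)).
  assert (Dt : Dom (bb a k l r) (tt a k l s u)).
  { exists 1. split; [lra|]. intros; now apply dom_tt. }
  assert (Dct : forall c, Dom (bb a k l r) (fun i j => c * tt a k l s u i j)%C).
  { intro c. exists (Cmod c * 1). split; [apply Rmult_le_pos; [apply Cmod_ge_0|lra]|].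
    intros i j. rewrite Cmod_mult, Rmult_assoc. apply Rmult_le_compat_l; [apply Cmod_ge_0|]. now apply dom_tt. }
  split.
  - assert (Ddd : Dom (bb a k l r) (fun i j => match i, j with 0%nat, 0%nat => a k l | _, _ => 0%C end)).
    { exists (exp (r * ln (INR k) + r * ln (INR l))). split; [left; apply exp_pos|].
      intros; now apply dom_dd. }
    assert (E : (cpow k s * cpow l u * ddseries a k l s u - a k l)%C
      = DS (fun i j => (cpow k s * cpow l u) * tt a k l s u i j
                       - match i, j with 0%nat, 0%nat => a k l | _, _ => 0%C end)%C).
    { rewrite (DS_minus _ M0 bpos brect); auto.
      rewrite (DS_scal _ M0 bpos brect); auto. rewrite DS_dd. reflexivity. }
    rewrite E.
    destruct (dom_props _ M0 bpos brect _ (K1 k l r * TT k l r (Re s) (Re u)) ltac:(nra)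
      (fun i j => entry1 a k l r s u i j Hk Hl Hs Hu)) as [_ [_ H]].
    eapply Rle_trans; [exact H|]. apply Rle_trans with (K1 k l r * TT k l r (Re s) (Re u) * (Rabs M0 + 1)); [apply Rmult_le_compat_l; [apply Rmult_le_pos; lra| lra] | right; ring].
  - assert (DdY : Dom (bb a k l r) (fun i j => match j with 0%nat => (a (i + k)%nat l * cpow (i + k) (- s))%C | _ => 0%C end)).
    { exists (exp (r * ln (INR l))). split; [left; apply exp_pos|].
      intros; now apply dom_dY. }
    assert (E : (cpow l u * ddseries a k l s u - drow a k l s)%C
      = DS (fun i j => cpow l u * tt a k l s u i j
                       - match j with 0%nat => (a (i + k)%nat l * cpow (i + k) (- s))%C | _ => 0%C end)%C).
    { rewrite (DS_minus _ M0 bpos brect); auto.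
      rewrite (DS_scal _ M0 bpos brect); auto. f_equal.
      unfold DS, drow. apply CSeries_ext; intro i.
      transitivity (CSeries (fun n => if Nat.eqb n 0 then (a (i + k)%nat l * cpow (i + k) (- s))%C else 0%C)).
      - symmetry; apply CSeries_delta.
      - apply CSeries_ext; intro j; destruct j; reflexivity. }
    rewrite E.
    destruct (dom_props _ M0 bpos brect _ (K2 k r * TT2 k l r (Re s) (Re u)) ltac:(nra)
      (fun i j => entry2 a k l r s u i j Hk Hl Hs Hu)) as [_ [_ H]].
    eapply Rle_trans; [exact H|]. apply Rle_trans with (K2 k r * TT2 k l r (Re s) (Re u) * (Rabs M0 + 1)); [apply Rmult_le_compat_l; [apply Rmult_le_pos; lra| lra] | right; ring].
Qed.
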